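(* Assume the setting in the context, and let $\mathbf d^*$ be any $\Phi_{\mathfrak B}$-optimal design with $\boldsymbol\Sigma^*=\mathbf M(\mathbf d^* )^{-1}=(c^*_{jk})$. Then for all $j,k\in\{1,\dots,m\}$ with $j\ne k$, writing $\mathbf E_{jk}=(\mathbf e_j,\mathbf e_k)$: $$|c^*_{jk}|\le\frac{\alpha}{2}K\,\lambda_{\max}\big(\mathbf E_{jk}'(\mathbf B\mathbf B')^{-1}\mathbf E_{jk}\big),$$ $$|c^*_{jk}|\le\frac{\alpha}{2}\lambda_{\max}\big(\mathbf E_{jk}'\mathbf N^+(\mathbf w^{(jk+)})\mathbf E_{jk}\big),$$ $$|c^*_{jk}|\le\frac{\alpha}{2}\lambda_{\max}\big(\mathbf E_{jk}'\mathbf N^+(\mathbf w^{(jk* )})\mathbf E_{jk}\big).$$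
   Context: Let $n,m,N,K$ be positive integers with $2\le m\le N\le n$, and let $\mathbf f_1,\dots,\mathbf f_n\in\mathbb R^m$ span $\mathbb R^m$. A (binary) design is $\mathbf d\in\{0,1\}^n$ with $\sum_i d_i=N$; its information matrix is $\mathbf M(\mathbf d)=\sum_{i=1}^n d_i\mathbf f_i\mathbf f_i'$. For $\ell\in\{1,\dots,K\}$ let $\mathbf B_\ell$ be a real $m\times s_\ell$ matrix, $\mathbf B=(\mathbf B_1,\dots,\mathbf B_K)$, with column space of $\mathbf B$ equal to $\mathbb R^m$ and no zero column. For positive definite $\mathbf M$, $\Phi_{\mathfrak B}(\mathbf M)=\max_{\ell}\mathrm{tr}(\mathbf B_\ell'\mathbf M^{-1}\mathbf B_\ell)$. A $\Phi_{\mathfrak B}$-optimal design minimizes $\Phi_{\mathfrak B}(\mathbf M(\mathbf d))$ over designs $\mathbf d$ with nonsingular $\mathbf M(\mathbf d)$. Let $\mathbf d_0$ be a design with nonsingular $\mathbf M(\mathbf d_0)$ and $\alpha=\Phi_{\mathfrak B}(\mathbf M(\mathbf d_0))$. For $\mathbf w\in\mathbb R^K$, $\mathbf w\ge 0$, $\sum w_\ell=1$, let $\mathbf N(\mathbf w)=\sum_\ell w_\ell\mathbf B_\ell\mathbf B_\ell'$; $\mathbf A^+$ is the Moore–Penrose pseudoinverse, $\lambda_{\max}$ the largest eigenvalue, $\mathbf e_j$ the $j$-th unit vector. For $j\in\{1,\dots,m\}$: write $\mathbf B^+\mathbf e_j=((\mathbf h^{(j+)}_1)',\dots,(\mathbf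 h^{(j+)}_K)')'$ with $\mathbf h^{(j+)}_\ell\in\mathbb R^{s_\ell}$, and set $w^{(j+)}_\ell=\|\mathbf h^{(j+)}_\ell\|/\sum_{t}\|\mathbf h^{(j+)}_t\|$; $\mathbf w^{(j* )}$ is a minimizer of $\mathbf e_j'\mathbf N^+(\mathbf w)\mathbf e_j$ over all such $\mathbf w$ with $\mathbf e_j\in\mathcal C(\mathbf N(\mathbf w))$. Then $\mathbf w^{(jk+)}=\tfrac12(\mathbf w^{(j+)}+\mathbf w^{(k+)})$ and $\mathbf w^{(jk* )}=\tfrac12(\mathbf w^{(j* )}+\mathbf w^{(k* )})$. *)

(* Defs.v *)
From HB Require Import structures.
From mathcomp Require Import all_boot all_order all_algebra.
From mathcomp Require Import boolp classical_sets reals.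
Set Implicit Arguments. Unset Strict Implicit. Unset Printing Implicit Defensive.
Import Order.TTheory GRing.Theory Num.Theory.
Local Open Scope ring_scope.

Section Defs.
Variable R : realType.

Definition is_mp_pinv (p q : nat) (A : 'M[R]_(p, q)) (X : 'M[R]_(q, p)) : Prop :=
  [/\ A *m X *m A = A, X *m A *m X = X,
      (A *m X)^T = A *m X & (X *m A)^T = X *m A].

(* Moore--Penrose pseudoinverse A^+ (it exists and is unique). *)
Definition mp_pinv (p q : nat) (A : 'M[R]_(p, q)) : 'M[R]_(q, p) :=
  xget 0 [set X | is_mp_pinv A X].

Definition lambda_max (p : nat) (A : 'M[R]_p) : R :=
  sup [set a : R | eigenvalue A a].

Definition unitv (m : nat) (j : 'I_m) : 'cV[R]_m := delta_mx j 0.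

Definition Ejk (m : nat) (j k : 'I_m) : 'M[R]_(m, 2) := row_mx (unitv j) (unitv k).

Definition enorm (p : nat) (v : 'cV[R]_p) : R := Num.sqrt (\sum_i v i 0 ^+ 2).

Definition infomx (n m : nat) (f : 'I_n -> 'cV[R]_m) (d : 'I_n -> bool) : 'M[R]_m :=
  \sum_(i < n) (d i)%:R *: (f i *m (f i)^T).

Definition is_design (n N : nat) (d : 'I_n -> bool) : Prop :=
  (\sum_(i < n) (d i : nat))%N = N.

(* Phi_B(M) = max_l tr(B_l' M^{-1} B_l)  (for positive definite M; the traces
   are then nonnegative so 0 is a neutral default for the max) *)
Definition PhiB (m K : nat) (s : 'I_K -> nat) (B : forall l : 'I_K, 'M[R]_(m, s l))
    (M : 'M[R]_m) : R :=
  \big[Num.max/0]_(l < K) \tr ((B l)^T *m invmx M *m B l).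

Definition is_PhiB_optimal (n m N K : nat) (f : 'I_n -> 'cV[R]_m) (s : 'I_K -> nat)
    (B : forall l : 'I_K, 'M[R]_(m, s l)) (dstar : 'I_n -> bool) : Prop :=
  [/\ is_design N dstar, infomx f dstar \in unitmx &
      forall d, is_design N d -> infomx f d \in unitmx ->
        PhiB B (infomx f dstar) <= PhiB B (infomx f d)].

Definition Bcat (m K : nat) (s : 'I_K -> nat) (B : forall l : 'I_K, 'M[R]_(m, s l))
  : 'M[R]_(m, \sum_(l < K) s l) := mxrow B.

Definition is_weight (K : nat) (w : 'I_K -> R) : Prop :=
  (forall l, 0 <= w l) /\ \sum_(l < K) w l = 1.

Definition Nmx (m K : nat) (s : 'I_K -> nat) (B : forall l : 'I_K, 'M[R]_(m, s l))
    (w : 'I_K -> R) : 'M[R]_m :=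
  \sum_(l < K) w l *: (B l *m (B l)^T).

Definition hplus (m K : nat) (s : 'I_K -> nat) (B : forall l : 'I_K, 'M[R]_(m, s l))
    (j : 'I_m) (l : 'I_K) : 'cV[R]_(s l) :=
  submxcol (mp_pinv (Bcat B) *m unitv j) l.

Definition wplus (m K : nat) (s : 'I_K -> nat) (B : forall l : 'I_K, 'M[R]_(m, s l))
    (j : 'I_m) : 'I_K -> R :=
  fun l => enorm (hplus B j l) / \sum_(t < K) enorm (hplus B j t).

Definition in_colspace (m p : nat) (v : 'cV[R]_m) (A : 'M[R]_(m, p)) : bool :=
  (v^T <= A^T)%MS.

Definition is_wstar (m K : nat) (s : 'I_K -> nat) (B : forall l : 'I_K, 'M[R]_(m, s l))
    (j : 'I_m) (w : 'I_K -> R) : Prop :=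
  [/\ is_weight w, in_colspace (unitv j) (Nmx B w) &
      forall v, is_weight v -> in_colspace (unitv j) (Nmx B v) ->
        ((unitv j)^T *m mp_pinv (Nmx B w) *m unitv j) 0 0
          <= ((unitv j)^T *m mp_pinv (Nmx B v) *m unitv j) 0 0].

Definition wavg (K : nat) (w1 w2 : 'I_K -> R) : 'I_K -> R :=
  fun l => (w1 l + w2 l) / 2.

End Defs.
Arguments unitv {R m}.
Arguments Ejk {R m}.

(* Main.v *)
Require Import Defs.
From HB Require Import structures.
From mathcomp Require Import all_boot all_order all_algebra.
From mathcomp Require Import boolp classical_sets reals.
From mathcomp Require Import ring lra.
Import Order.TTheory GRing.Theory Num.Theory.
Local Open Scope ring_scope.
Set Implicit Arguments. Unset Strict Implicit. Unset Printing Implicit Defensive.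

Section SA.
Variable R : realType.

Lemma gram_ge0 p q (A : 'M[R]_(p, q)) c : 0 <= (A^T *m A) c c.
Proof. rewrite !mxE; apply: sumr_ge0 => i _; rewrite mxE -expr2; exact: sqr_ge0. Qed.

Lemma gram_tr_eq0 p q (A : 'M[R]_(p, q)) : \tr (A^T *m A) = 0 -> A = 0.
Proof.
move=> H; apply/matrixP => i c; rewrite mxE.
have /psumr_eq0P H1 : \sum_(c < q) (A^T *m A) c c = 0 by [].
have := H1 (fun c _ => gram_ge0 A c) c isT.
rewrite mxE => /psumr_eq0P H2.
have := H2 (fun i _ => ltac:(rewrite mxE -expr2; exact: sqr_ge0)) i isT.
by rewrite mxE -expr2 => /eqP; rewrite sqrf_eq0 => /eqP.
Qed.

Lemma row_free_gram p q (M : 'M[R]_(p, q)) : row_free M -> M *m M^T \in unitmx.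
Proof.
move=> fM; rewrite -row_free_unit; apply: inj_row_free => v Hv.
have H0 : (v *m M)^T^T *m (v *m M)^T = 0.
  by rewrite trmxK trmx_mul mulmxA -(mulmxA v) Hv mul0mx.
have /gram_tr_eq0 /(congr1 trmx) : \tr ((v *m M)^T^T *m (v *m M)^T) = 0 by rewrite H0 linear0.
rewrite trmxK trmx0 => /eqP; rewrite mulmx_free_eq0 // => /eqP. done.
Qed.

Lemma mp_factor p q r (C : 'M[R]_(p, r)) (F : 'M[R]_(r, q)) :
  C^T *m C \in unitmx -> F *m F^T \in unitmx ->
  is_mp_pinv (C *m F) (F^T *m invmx (F *m F^T) *m invmx (C^T *m C) *m C^T).
Proof.
move=> uC uF.
have eAX : C *m F *m (F^T *m invmx (F *m F^T) *m invmx (C^T *m C) *m C^T)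
   = C *m invmx (C^T *m C) *m C^T.
  by rewrite !mulmxA -(mulmxA C F) -(mulmxA C) mulmxV // mulmx1.
have eXA : (F^T *m invmx (F *m F^T) *m invmx (C^T *m C) *m C^T) *m (C *m F)
   = F^T *m invmx (F *m F^T) *m F.
  by rewrite !mulmxA -(mulmxA _ C^T C) mulmxKV.
split.
- by rewrite eAX -!mulmxA (mulmxA C^T C F) mulKmx.
- by rewrite eXA -!mulmxA (mulmxA F F^T) mulKmx.
- by rewrite eAX !trmx_mul trmxK trmx_inv trmx_mul trmxK mulmxA.
- by rewrite eXA !trmx_mul trmxK trmx_inv trmx_mul trmxK mulmxA.
Qed.

Lemma mp_exists p q (A : 'M[R]_(p, q)) : exists X, is_mp_pinv A X.
Proof.
have uC : (col_base A)^T *m (col_base A)^T^T \in unitmx.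
  apply: row_free_gram; rewrite /row_free mxrank_tr.
  by have := col_base_full A; rewrite /row_full.
have uF : row_base A *m (row_base A)^T \in unitmx.
  exact/row_free_gram/row_base_free.
rewrite trmxK in uC.
eexists; rewrite -[X in is_mp_pinv X](mulmx_base A); exact: mp_factor.
Qed.

Lemma mp_unique p q (A : 'M[R]_(p, q)) X Y : is_mp_pinv A X -> is_mp_pinv A Y -> X = Y.
Proof.
case=> [h1 h2 h3 h4] [g1 g2 g3 g4].
have e1 : X = X *m X^T *m A^T by rewrite -mulmxA -trmx_mul h3 mulmxA h2.
have e2 : A^T = A^T *m A *m Y by rewrite -mulmxA -{1}g3 -trmx_mul g1.
have e3 : X = X *m A *m Y.
  transitivity (X *m X^T *m (A^T *m A *m Y)); first by rewrite -e2 -e1.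
  by rewrite !mulmxA -(mulmxA X X^T A^T) -trmx_mul h3 mulmxA h2.
have f1 : Y = A^T *m Y^T *m Y by rewrite -trmx_mul g4 g2.
have f2 : A^T = X *m A *m A^T by rewrite -h4 -trmx_mul mulmxA h1.
have e4 : Y = X *m A *m Y.
  transitivity (X *m A *m A^T *m Y^T *m Y); first by rewrite -f2 -f1.
  by rewrite -!mulmxA (mulmxA A^T Y^T Y) -trmx_mul g4 g2.
by rewrite {1}e3 -e4.
Qed.

Lemma mp_pinvP p q (A : 'M[R]_(p, q)) : is_mp_pinv A (mp_pinv A).
Proof. by rewrite /mp_pinv; apply: (@xgetPex _ 0 [set X | is_mp_pinv A X]); apply: mp_exists. Qed.

Lemma mp_sym_aux p (A X : 'M[R]_p) : A^T = A -> is_mp_pinv A X -> is_mp_pinv A X^T.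
Proof.
move=> sA [h1 h2 h3 h4]; split.
- by apply: (can_inj (@trmxK _ _ _)); rewrite !trmx_mul !trmxK sA mulmxA h1.
- by apply: (can_inj (@trmxK _ _ _)); rewrite !trmx_mul !trmxK sA mulmxA h2.
- by rewrite trmx_mul trmxK sA -h4 trmx_mul sA.
- by rewrite trmx_mul trmxK sA -h3 trmx_mul sA.
Qed.

Lemma mp_pinv_sym p (A : 'M[R]_p) : A^T = A -> (mp_pinv A)^T = mp_pinv A.
Proof.
move=> sA; apply: (mp_unique (mp_sym_aux sA (mp_pinvP A)) (mp_pinvP A)).
Qed.
End SA.

Section SB.
Variable R : realType.

Lemma vmul2 (v : 'rV[R]_2) (A : 'M[R]_2) b :
  (v *m A) 0 b = v 0 0 * A 0 b + v 0 1 * A 1 b.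
Proof. rewrite !mxE !big_ord_recl big_ord0 addr0 (_ : lift ord0 ord0 = 1) //; exact: val_inj. Qed.

Lemma lmax2 (A : 'M[R]_2) : A 0 1 = A 1 0 ->
  A 0 0 + A 1 1 + 2 * `|A 0 1| <= 2 * lambda_max A.
Proof.
move=> sA; pose p : R := A 0 0; pose q : R := A 0 1; pose r : R := A 1 1.
pose D : R := Num.sqrt (((p - r) / 2) ^+ 2 + q ^+ 2).
have D0 : 0 <= D by exact: sqrtr_ge0.
have D2 : D ^+ 2 = ((p - r) / 2) ^+ 2 + q ^+ 2.
  by rewrite sqr_sqrtr // addr_ge0 // sqr_ge0.
pose l0 : R := (p + r) / 2 + D.
have Dq : `|q| <= D.
  rewrite -(ger0_norm D0); rewrite -ler_sqr ?nnegrE ?normr_ge0 //.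
  by rewrite !real_normK ?num_real // D2 lerDr sqr_ge0.
have Dpr : `|(p - r) / 2| <= D.
  rewrite -(ger0_norm D0); rewrite -ler_sqr ?nnegrE ?normr_ge0 //.
  by rewrite !real_normK ?num_real // D2 lerDl sqr_ge0.
have lp : 0 <= l0 - p.
  have := ler_norm ((p - r) / 2) => h; rewrite /l0; lra.
have lr : 0 <= l0 - r.
  have := ler_norm (- ((p - r) / 2)); rewrite normrN => h; rewrite /l0; lra.
have lpr : (l0 - p) * (l0 - r) = q ^+ 2.
  rewrite /l0; apply: (@addrI _ (((p - r) / 2) ^+ 2)); rewrite -D2; clearbody D p q r; by field.
have quad : forall x y : R, p * x ^+ 2 + 2 * q * x * y + r * y ^+ 2 <= l0 * (x ^+ 2 + y ^+ 2).
  move=> x y.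
  have [h0|hpos] := eqVneq ((l0 - p) + (l0 - r)) 0.
    have ha : l0 - p = 0 by lra.
    have hq : q ^+ 2 = 0 by rewrite -lpr ha mul0r.
    have hq0 : q = 0 by apply/eqP; rewrite -sqrf_eq0 hq.
    have hb : l0 - r = 0 by lra.
    have -> : p = l0 by lra.
    have -> : r = l0 by lra.
    rewrite hq0; lra.
  have hs : 0 < (l0 - p) + (l0 - r) by rewrite lt_def hpos /=; lra.
  have key : ((l0 - p) + (l0 - r)) * ((l0 - p) * x ^+ 2 - 2 * q * x * y + (l0 - r) * y ^+ 2)
     = ((l0 - p) * x - q * y) ^+ 2 + (q * x - (l0 - r) * y) ^+ 2.
    rewrite -[RHS]addr0 -(subrr (q ^+ 2 * (x ^+ 2 + y ^+ 2))) -{1}lpr; ring.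
  have : 0 <= (l0 - p) * x ^+ 2 - 2 * q * x * y + (l0 - r) * y ^+ 2.
    rewrite -(pmulr_rge0 _ hs) key; apply: addr_ge0; exact: sqr_ge0.
  lra.
have ev : eigenvalue A l0.
  apply/eigenvalueP.
  have [v1z|v1nz] := eqVneq (\row_(i < 2) (if i == 0 then q else l0 - p)) 0.
    have hq : q = 0 by have := congr1 (fun M : 'M[R]_(1,2) => M 0 0) v1z; rewrite !mxE.
    have hl : l0 - p = 0 by have := congr1 (fun M : 'M[R]_(1,2) => M 0 1) v1z; rewrite !mxE.
    exists (\row_(i < 2) (if i == 0 then 1 else 0)).
      apply/rowP => b; rewrite vmul2 !mxE /=.
      case: b => [[|[|//]] hb] /=.
      - rewrite (_ : Ordinal hb = 0); last exact: val_inj. rewrite -/p; lra.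
      - rewrite (_ : Ordinal hb = 1); last exact: val_inj. rewrite -/q hq; lra.
    apply/eqP => /(congr1 (fun M : 'M[R]_(1,2) => M 0 0)); rewrite !mxE /=; lra.
  exists (\row_(i < 2) (if i == 0 then q else l0 - p)) => //.
  apply/rowP => b; rewrite vmul2 !mxE /=.
  case: b => [[|[|//]] hb] /=.
  - rewrite (_ : Ordinal hb = 0); last exact: val_inj. rewrite -/p -sA -/q. ring.
  - rewrite (_ : Ordinal hb = 1); last exact: val_inj. rewrite -/q -/r.
    nra.
have ub : ubound [set a : R | eigenvalue A a] l0.
  move=> a /= /eigenvalueP [v hv vnz].
  have e0 := congr1 (fun M : 'M[R]_(1,2) => M 0 0) hv; have e1 := congr1 (fun M : 'M[R]_(1,2) => M 0 1) hv.
  rewrite vmul2 !mxE -/p -sA -/q in e0; rewrite vmul2 !mxE -/r -/q in e1.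
  have pos : 0 < v 0 0 ^+ 2 + v 0 1 ^+ 2.
    rewrite lt_def paddr_eq0 ?sqr_ge0 // !sqrf_eq0 addr_ge0 ?sqr_ge0 // andbT.
    apply/negP => /andP [/eqP h0 /eqP h1]; apply/negP: vnz; rewrite negbK.
    apply/eqP/rowP => i; rewrite mxE; case: i => [[|[|//]] hi].
    + by rewrite (_ : Ordinal hi = 0) //; exact: val_inj.
    + by rewrite (_ : Ordinal hi = 1) //; exact: val_inj.
  have := quad (v 0 0) (v 0 1).
  have -> : p * v 0 0 ^+ 2 + 2 * q * v 0 0 * v 0 1 + r * v 0 1 ^+ 2 = a * (v 0 0 ^+ 2 + v 0 1 ^+ 2).
    transitivity (v 0 0 * (v 0 0 * p + v 0 1 * q) + v 0 1 * (v 0 0 * q + v 0 1 * r)); first by ring.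
    by rewrite e0 e1; ring.
  by rewrite ler_pM2r.
have : l0 <= lambda_max A.
  by apply: (ub_le_sup (ex_intro _ l0 ub)).
rewrite -/p -/q -/r /l0; lra.
Qed.
End SB.

Section SC.
Variable R : realType.

Lemma sum_deltar m (F : 'I_m -> R) i : \sum_y F y * (y == i)%:R = F i.
Proof.
rewrite (bigD1 i) //= eqxx mulr1 big1 ?addr0 // => y /negbTE ->; by rewrite mulr0.
Qed.
Lemma sum_deltal m (F : 'I_m -> R) i : \sum_y (y == i)%:R * F y = F i.
Proof. by under eq_bigr do rewrite mulrC; exact: sum_deltar. Qed.

Definition idx m (j k : 'I_m) (c : 'I_2) := if c == 0 then j else k.

Lemma Ejk_entry m (j k : 'I_m) y c : (Ejk j k : 'M[R]_(m, 2)) y c = (y == idx j k c)%:R.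
Proof.
rewrite /Ejk /idx; case: c => [[|[|//]] hc].
- rewrite (_ : Ordinal hc = lshift 1 (0 : 'I_1)); last exact: val_inj.
  by rewrite [LHS](row_mxEl (unitv j : 'cV[R]_m) (unitv k)) /unitv mxE andbT.
- rewrite (_ : Ordinal hc = rshift 1 (0 : 'I_1)); last exact: val_inj.
  by rewrite [LHS](row_mxEr (unitv j : 'cV[R]_m) (unitv k)) /unitv mxE andbT.
Qed.

Lemma EQE_entry m (j k : 'I_m) (Q : 'M[R]_m) a b :
  ((Ejk j k)^T *m Q *m Ejk j k) a b = Q (idx j k a) (idx j k b).
Proof.
rewrite mxE; under eq_bigr do rewrite Ejk_entry mxE.
rewrite sum_deltar; under eq_bigr do rewrite mxE Ejk_entry.
by rewrite sum_deltal.
Qed.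
End SC.

Section SD.
Variable R : realType.

Lemma addE p q (A B : 'M[R]_(p, q)) i j : (A + B) i j = A i j + B i j.
Proof. by rewrite mxE. Qed.
Lemma scaleE p q (a : R) (A : 'M[R]_(p, q)) i j : (a *: A) i j = a * A i j.
Proof. by rewrite mxE. Qed.
Lemma mx11_mul (A B : 'M[R]_1) : (A *m B) 0 0 = A 0 0 * B 0 0.
Proof. by rewrite mxE big_ord1. Qed.

Lemma trZ p q (a : R) (A : 'M[R]_(p, q)) : (a *: A)^T = a *: A^T.
Proof. by apply/matrixP => i j; rewrite !mxE. Qed.
Lemma trD p q (A B : 'M[R]_(p, q)) : (A + B)^T = A^T + B^T.
Proof. by apply/matrixP => i j; rewrite !mxE. Qed.
Lemma trN p q (A : 'M[R]_(p, q)) : (- A)^T = - A^T.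
Proof. by apply/matrixP => i j; rewrite !mxE. Qed.

Lemma trS p q (I : finType) (A : I -> 'M[R]_(p, q)) : (\sum_i A i)^T = \sum_i (A i)^T.
Proof. by apply/matrixP => a b; rewrite !mxE !summxE; apply: eq_bigr => i _; rewrite mxE. Qed.

Lemma quad_sum m (I : finType) (p : I -> nat) (G : forall i, 'M[R]_(m, p i))
   (c : I -> R) (u : 'cV[R]_m) :
  (u^T *m (\sum_i c i *: (G i *m (G i)^T)) *m u) 0 0
   = \sum_i c i * (((G i)^T *m u)^T *m ((G i)^T *m u)) 0 0.
Proof.
rewrite mulmx_sumr mulmx_suml summxE; apply: eq_bigr => i _.
by rewrite -scalemxAr -scalemxAl mxE trmx_mul trmxK !mulmxA.
Qed.

Lemma bil_sum m (I : finType) (c : I -> R) (M : I -> 'M[R]_m) (P : 'M[R]_(1, m)) (Q : 'M[R]_(m, 1)) :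
  (P *m (\sum_i c i *: M i) *m Q) 0 0 = \sum_i c i * (P *m M i *m Q) 0 0.
Proof.
rewrite mulmx_sumr mulmx_suml summxE; apply: eq_bigr => i _.
by rewrite -scalemxAr -scalemxAl mxE.
Qed.

Lemma infomx_sym n m (f : 'I_n -> 'cV[R]_m) d : (infomx f d)^T = infomx f d.
Proof.
rewrite /infomx trS; apply: eq_bigr => i _.
by rewrite trZ trmx_mul trmxK.
Qed.

Lemma infomx_psd n m (f : 'I_n -> 'cV[R]_m) d (u : 'cV[R]_m) : 0 <= (u^T *m infomx f d *m u) 0 0.
Proof.
rewrite /infomx (@quad_sum m _ (fun _ => 1%N) (fun i => f i)).
apply: sumr_ge0 => i _; apply: mulr_ge0; [exact: ler0n | exact: gram_ge0].
Qed.

Lemma inv_psd m (M : 'M[R]_m) : M^T = M -> M \in unitmx ->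
  (forall u : 'cV_m, 0 <= (u^T *m M *m u) 0 0) -> forall u : 'cV_m, 0 <= (u^T *m invmx M *m u) 0 0.
Proof.
move=> sM uM pM u; have := pM (invmx M *m u).
rewrite trmx_mul trmx_inv sM -!mulmxA (mulmxA M) mulmxV // mul1mx.
by rewrite mulmxA.
Qed.

Lemma tr_psd m p (S : 'M[R]_m) (X : 'M[R]_(m, p)) :
  (forall u : 'cV_m, 0 <= (u^T *m S *m u) 0 0) -> 0 <= \tr (X^T *m S *m X).
Proof.
move=> pS; apply: sumr_ge0 => c _.
have -> : (X^T *m S *m X) c c = ((col c X)^T *m S *m col c X) 0 0.
  rewrite !mxE; apply: eq_bigr => y _; rewrite !mxE; congr (_ * _).
  by apply: eq_bigr => x _; rewrite !mxE.
exact: pS.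
Qed.
End SD.

Section SE.
Variable R : realType.

Lemma mxtraceN' m (A : 'M[R]_m) : \tr (- A) = - \tr A.
Proof. by rewrite -scaleN1r mxtraceZ mulN1r. Qed.

Lemma bil_expand m p (S : 'M[R]_m) (U V : 'M[R]_(m, p)) (t : R) : S^T = S ->
  \tr ((U - t *: V)^T *m S *m (U - t *: V))
  = \tr (U^T *m S *m U) - 2 * t * \tr (U^T *m S *m V) + t ^+ 2 * \tr (V^T *m S *m V).
Proof.
move=> sS.
have sym : \tr (V^T *m S *m U) = \tr (U^T *m S *m V).
  by rewrite -mxtrace_tr !trmx_mul trmxK sS mulmxA.
rewrite trD trN trZ !mulmxDl !mulmxDr !mulNmx !mulmxN -!scalemxAl -!scalemxAr.
rewrite !mxtraceD !mxtraceN' !mxtraceZ sym; ring.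
Qed.

Lemma bil_UU m p (S : 'M[R]_m) (x : 'cV[R]_m) (r : 'rV[R]_p) :
  \tr ((x *m r)^T *m S *m (x *m r)) = (x^T *m S *m x) 0 0 * (r *m r^T) 0 0.
Proof.
rewrite trmx_mul -!mulmxA mxtrace_mulC trace_mx11 -!mulmxA.
by rewrite !(mulmxA x^T) !(mulmxA (x^T *m S)) mx11_mul.
Qed.

Lemma bil_UV m p (S : 'M[R]_m) (x : 'cV[R]_m) (r : 'rV[R]_p) (V : 'M[R]_(m, p)) :
  \tr ((x *m r)^T *m S *m V) = (x^T *m S *m (V *m r^T)) 0 0.
Proof.
by rewrite trmx_mul -!mulmxA mxtrace_mulC trace_mx11 -!mulmxA.
Qed.
End SE.

Section SF.
Variable R : realType.

Lemma core m K (s : 'I_K -> nat) (B : forall l, 'M[R]_(m, s l)) (w : 'I_K -> R)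
  (S : 'M[R]_m) (y : 'cV[R]_m) (t : R) :
  S^T = S -> (forall u : 'cV_m, 0 <= (u^T *m S *m u) 0 0) -> (forall l, 0 <= w l) ->
  0 <= ((Nmx B w *m y)^T *m S *m (Nmx B w *m y)) 0 0 * (y^T *m Nmx B w *m y) 0 0
       - 2 * t * ((Nmx B w *m y)^T *m S *m (Nmx B w *m y)) 0 0
       + t ^+ 2 * \sum_l w l * \tr ((B l)^T *m S *m B l).
Proof.
move=> sS pS pw.
set x := Nmx B w *m y.
set q := (x^T *m S *m x) 0 0.
have hl : forall l, \tr ((x *m (y^T *m B l) - t *: B l)^T *m S *m (x *m (y^T *m B l) - t *: B l))
   = q * (y^T *m (B l *m (B l)^T) *m y) 0 0 - 2 * t * (x^T *m S *m (B l *m (B l)^T) *m y) 0 0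
     + t ^+ 2 * \tr ((B l)^T *m S *m B l).
  move=> l; rewrite bil_expand // bil_UU bil_UV.
  by rewrite (trmx_mul y^T (B l)) trmxK !mulmxA -(mulmxA (x^T *m S) (Nmx B w) y).

have h0 : 0 <= \sum_l w l * \tr ((x *m (y^T *m B l) - t *: B l)^T *m S *m (x *m (y^T *m B l) - t *: B l)).
  apply: sumr_ge0 => l _; apply: mulr_ge0 => //; exact: tr_psd.
rewrite (eq_bigr _ (fun l _ => congr1 (fun z => w l * z) (hl l))) in h0.
have eT : (y^T *m Nmx B w *m y) 0 0 = \sum_l w l * (y^T *m (B l *m (B l)^T) *m y) 0 0.
  by rewrite /Nmx bil_sum.
have eq : q = \sum_l w l * (x^T *m S *m (B l *m (B l)^T) *m y) 0 0.
  by rewrite /q {2}/x mulmxA /Nmx bil_sum.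
rewrite eT {2}eq mulr_sumr !mulr_sumr -!sumrN -!big_split /=.
apply: le_trans h0 _; rewrite le_eqVlt; apply/orP; left; apply/eqP.
apply: eq_bigr => l _; ring.
Qed.
End SF.

Section SG.
Variable R : realType.

Lemma qle (q T W alpha : R) : 0 <= T -> W <= alpha ->
  (forall t, 0 <= q * T - 2 * t * q + t ^+ 2 * W) -> q <= alpha * T.
Proof.
move=> T0 Wa h.
have [Tp|Tz] := eqVneq T 0; last first.
  have Tpos : 0 < T by rewrite lt_def Tz.
  have := h T.
  have -> : q * T - 2 * T * q + T ^+ 2 * W = T * (T * W - q) by ring.
  rewrite pmulr_rge0 // subr_ge0 => hq.
  nra.
rewrite Tp mulr0; rewrite leNgt; apply/negP => qp.
pose t := q / (`|W| + 1).
have d0 : 0 < `|W| + 1 by rewrite ltr_pwDr // normr_ge0.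
have tp : 0 < t by rewrite divr_gt0.
have tq : t * (`|W| + 1) = q by rewrite /t divfK // gt_eqF.
have := h t; rewrite Tp mulr0 sub0r.
have hW : t ^+ 2 * W <= t ^+ 2 * `|W| by rewrite ler_wpM2l ?sqr_ge0 ?ler_norm.
nra.
Qed.
End SG.

Section SH.
Variable R : realType.

Lemma uMv m (M : 'M[R]_m) a b : ((unitv a)^T *m M *m unitv b) 0 0 = M a b.
Proof. by rewrite /unitv trmx_delta -rowE -colE !mxE. Qed.

Lemma quadx m (M : 'M[R]_m) a b (g : R) :
  ((unitv a + g *: unitv b)^T *m M *m (unitv a + g *: unitv b)) 0 0
  = M a a + g * (M a b + M b a) + g ^+ 2 * M b b.
Proof.
rewrite trD trZ !mulmxDl !mulmxDr -!scalemxAl -!scalemxAr !addE !scaleE !uMv; ring.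
Qed.

Lemma Nmx_sym m K (s : 'I_K -> nat) (B : forall l, 'M[R]_(m, s l)) w : (Nmx B w)^T = Nmx B w.
Proof. by rewrite /Nmx trS; apply: eq_bigr => l _; rewrite trZ trmx_mul trmxK. Qed.

Lemma colsp_y m (v : 'cV[R]_m) (N : 'M[R]_m) : N^T = N -> in_colspace v N ->
  exists y, v = N *m y.
Proof.
move=> sN /submxP [D hD]; exists D^T.
by rewrite -[v]trmxK hD trmx_mul trmxK.
Qed.

Lemma key n m K (f : 'I_n -> 'cV[R]_m) (s : 'I_K -> nat) (B : forall l, 'M[R]_(m, s l))
  (dstar : 'I_n -> bool) (w : 'I_K -> R) (Q : 'M[R]_m) (cc alpha : R) (j k : 'I_m) :
  infomx f dstar \in unitmx -> PhiB B (infomx f dstar) <= alpha ->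
  is_weight w -> in_colspace (unitv j) (Nmx B w) -> in_colspace (unitv k) (Nmx B w) ->
  Q^T = Q -> 0 <= cc -> Nmx B w *m (cc *: Q) *m Nmx B w = Nmx B w ->
  `|invmx (infomx f dstar) j k| <= alpha / 2 * cc * lambda_max ((Ejk j k)^T *m Q *m Ejk j k).
Proof.
move=> uM Phi [w0 w1] cj ck sQ c0 NPN.
have sM := infomx_sym f dstar.
have sS : (invmx (infomx f dstar))^T = invmx (infomx f dstar) by rewrite trmx_inv sM.
have pS := inv_psd sM uM (infomx_psd f dstar).
have sN := Nmx_sym B w.
have Wle : \sum_l w l * \tr ((B l)^T *m invmx (infomx f dstar) *m B l) <= alpha.
  apply: le_trans Phi.
  apply: (@le_trans _ _ (\sum_l w l * PhiB B (infomx f dstar))).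
    apply: ler_sum => l _; apply: ler_wpM2l => //; exact: le_bigmax.
  by rewrite -mulr_suml w1 mul1r.
have a0 : 0 <= alpha by apply: le_trans Phi; exact: bigmax_ge_id.
have [yj ej] := colsp_y sN cj.
have [yk ek] := colsp_y sN ck.
set S : 'M[R]_m := invmx (infomx f dstar) in sS pS Wle *.
have step : forall g : R, (S j j + g * (S j k + S k j) + g ^+ 2 * S k k)
   <= alpha * (cc * (Q j j + g * (Q j k + Q k j) + g ^+ 2 * Q k k)).
  move=> g.
  have ex : unitv j + g *: unitv k = Nmx B w *m (yj + g *: yk).
    by rewrite mulmxDr -scalemxAr -ej -ek.
  rewrite -!quadx ex -scaleE scalemxAl scalemxAr.
  have -> : ((Nmx B w *m (yj + g *: yk))^T *m (cc *: Q) *m (Nmx B w *m (yj + g *: yk))) 0 0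
      = ((yj + g *: yk)^T *m Nmx B w *m (yj + g *: yk)) 0 0.
    by set z := yj + g *: yk; rewrite trmx_mul sN !mulmxA -(mulmxA z^T (Nmx B w) (cc *: Q)) -(mulmxA z^T _ (Nmx B w)) NPN.
  apply: (qle _ Wle).
    rewrite /Nmx quad_sum; apply: sumr_ge0 => l _; apply: mulr_ge0 => //; exact: gram_ge0.
  move=> t; exact: core.
pose sg : R := if 0 <= S j k then 1 else -1.
have sg2 : sg ^+ 2 = 1 by rewrite /sg; case: ifP => _; rewrite ?expr1n ?sqrrN ?expr1n.
have sgc : sg * S j k = `|S j k|.
  rewrite /sg; case: ifP => h; first by rewrite mul1r ger0_norm.
  by rewrite mulN1r ltr0_norm // ltNge h.
have sgq : sg * Q j k <= `|Q j k|.
  rewrite /sg; case: ifP => _; first by rewrite mul1r ler_norm.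
  by rewrite mulN1r -normrN ler_norm.
have symS : S k j = S j k :> R by rewrite -[in LHS]sS mxE.
have symQ : Q k j = Q j k by rewrite -[in LHS]sQ mxE.
have h1 := step sg.
have h2 : 0 <= S j j + (- sg) * (S j k + S k j) + (- sg) ^+ 2 * S k k.
  by rewrite -quadx; exact: pS.
have hl := lmax2 (_ : ((Ejk j k)^T *m Q *m Ejk j k) 0 1 = ((Ejk j k)^T *m Q *m Ejk j k) 1 0).
rewrite !EQE_entry /idx /= in hl.
have := hl (esym symQ) => {}hl.
rewrite symS symQ sg2 in h1; rewrite symS sqrrN sg2 in h2.
set L := lambda_max _ in hl *.
have hac : 0 <= alpha * cc by exact: mulr_ge0.
have : alpha * cc * (Q j j + Q k k + 2 * `|Q j k|) <= alpha * cc * (2 * L) by exact: ler_wpM2l.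
nra.
Qed.
End SH.

Section SI.
Variable R : realType.

Lemma mxtraceS m (I : finType) (A : I -> 'M[R]_m) : \tr (\sum_i A i) = \sum_i \tr (A i).
Proof.
rewrite /mxtrace; under eq_bigr do rewrite summxE.
by rewrite exchange_big.
Qed.

Lemma gram_tr_ge0 p q (A : 'M[R]_(p, q)) : 0 <= \tr (A^T *m A).
Proof. by apply: sumr_ge0 => i _; exact: gram_ge0. Qed.

Lemma blk_sub m K (s : 'I_K -> nat) (B : forall l, 'M[R]_(m, s l)) (w : 'I_K -> R) l :
  (forall l, 0 <= w l) -> 0 < w l -> ((B l)^T <= Nmx B w)%MS.
Proof.
move=> w0 wl; rewrite submxE; move: (mulmx_coker (Nmx B w)).
move: (cokermx (Nmx B w)) => Z NZ; apply/eqP.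
have h : \tr (Z^T *m Nmx B w *m Z) = 0 by rewrite -mulmxA NZ mulmx0 linear0.
rewrite /Nmx mulmx_sumr mulmx_suml mxtraceS in h.
have tl : forall l', \tr (Z^T *m (w l' *: (B l' *m (B l')^T)) *m Z)
   = w l' * \tr (((B l')^T *m Z)^T *m ((B l')^T *m Z)).
  by move=> l'; rewrite -scalemxAr -scalemxAl mxtraceZ trmx_mul trmxK !mulmxA.
rewrite (eq_bigr _ (fun l' _ => tl l')) in h.
have /psumr_eq0P H0 := h.
have := H0 (fun l' _ => mulr_ge0 (w0 l') (gram_tr_ge0 _)) l isT.
move=> /eqP; rewrite mulf_eq0 (gt_eqF wl) /= => /eqP.
move=> /gram_tr_eq0; done.
Qed.
End SI.

Section SJ.
Variable R : realType.

Lemma colsp_mono m K (s : 'I_K -> nat) (B : forall l, 'M[R]_(m, s l)) (u w : 'I_K -> R)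
  (v : 'cV[R]_m) : (forall l, 0 <= u l) -> (forall l, 0 <= w l) ->
  (forall l, 0 < u l -> 0 < w l) -> in_colspace v (Nmx B u) -> in_colspace v (Nmx B w).
Proof.
move=> u0 w0 uw; rewrite /in_colspace !Nmx_sym => h.
apply: submx_trans h _.
rewrite /Nmx; apply: summx_sub => l _.
have [ul0|ulnz] := eqVneq (u l) 0; first by rewrite ul0 scale0r sub0mx.
apply: scalemx_sub; apply: submx_trans (submxMl _ _) (blk_sub B w0 _).
by apply: uw; rewrite lt_def ulnz u0.
Qed.

Lemma wavg_weight K (w1 w2 : 'I_K -> R) : is_weight w1 -> is_weight w2 -> is_weight (wavg w1 w2).
Proof.
move=> [p1 s1] [p2 s2]; split => [l|]; first by rewrite /wavg divr_ge0 ?addr_ge0.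
by rewrite /wavg -mulr_suml big_split /= s1 s2; field.
Qed.

Lemma enorm_eq0 p (v : 'cV[R]_p) : enorm v = 0 -> v = 0.
Proof.
rewrite /enorm => /eqP; rewrite sqrtr_eq0 => hle.
have hs : \sum_i v i 0 ^+ 2 = 0.
  by apply/eqP; rewrite eq_le hle sumr_ge0 // => i _; exact: sqr_ge0.
have /psumr_eq0P H0 := hs.
apply/matrixP => i c; rewrite (ord1 c) mxE.
have := H0 (fun i _ => sqr_ge0 (v i 0)) i isT.
by move=> /eqP; rewrite sqrf_eq0 => /eqP.
Qed.

Lemma enorm_ge0 p (v : 'cV[R]_p) : 0 <= enorm v.
Proof. exact: sqrtr_ge0. Qed.

Lemma enorm_gt0 p (v : 'cV[R]_p) : v != 0 -> 0 < enorm v.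
Proof.
move=> vnz; rewrite lt_def enorm_ge0 andbT; apply/eqP => /enorm_eq0 h.
by rewrite h eqxx in vnz.
Qed.

Lemma Bpinv m S' (Bc : 'M[R]_(m, S')) : \rank Bc = m -> Bc *m mp_pinv Bc = 1%:M.
Proof.
move=> rk; have [h1 _ _ _] := mp_pinvP Bc.
have rf : row_free Bc by rewrite /row_free rk.
by apply: (row_free_inj rf); rewrite /= h1 mul1mx.
Qed.

Lemma hplus_sum m K (s : 'I_K -> nat) (B : forall l, 'M[R]_(m, s l)) (j : 'I_m) :
  \rank (Bcat B) = m -> unitv j = \sum_l B l *m hplus B j l.
Proof.
move=> rk.
transitivity (Bcat B *m (mp_pinv (Bcat B) *m unitv j)); first by rewrite mulmxA Bpinv // mul1mx.
by rewrite -[mp_pinv (Bcat B) *m unitv j]submxcolK /Bcat mul_mxrow_mxcol.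
Qed.

Lemma unitv_neq0 m (j : 'I_m) : unitv j != 0 :> 'cV[R]_m.
Proof.
apply/eqP => /matrixP /(_ j 0); rewrite !mxE !eqxx /=; apply/eqP; exact: oner_neq0.
Qed.

Lemma wplus_props m K (s : 'I_K -> nat) (B : forall l, 'M[R]_(m, s l)) (j : 'I_m) :
  \rank (Bcat B) = m ->
  is_weight (wplus B j) /\ (forall l, hplus B j l != 0 -> 0 < wplus B j l).
Proof.
move=> rk.
have S0 : 0 <= \sum_t enorm (hplus B j t) by apply: sumr_ge0 => t _; exact: enorm_ge0.
have Sp : 0 < \sum_t enorm (hplus B j t).
  rewrite lt_def S0 andbT; apply/eqP => hs.
  have /psumr_eq0P H0 := hs.
  have hz : forall t, hplus B j t = 0.
    by move=> t; apply: enorm_eq0; exact: H0 (fun t _ => enorm_ge0 _) t isT.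
  have := hplus_sum j rk; rewrite big1 => [|l _]; last by rewrite hz mulmx0.
  by move/eqP; rewrite (negbTE (unitv_neq0 j)).
split; first split.
- by move=> l; rewrite /wplus divr_ge0 // enorm_ge0.
- by rewrite /wplus -mulr_suml mulfV // gt_eqF.
- by move=> l hl; rewrite /wplus divr_gt0 // enorm_gt0.
Qed.

Lemma colsp_h m K (s : 'I_K -> nat) (B : forall l, 'M[R]_(m, s l)) (j : 'I_m) (w : 'I_K -> R) :
  \rank (Bcat B) = m -> (forall l, 0 <= w l) -> (forall l, hplus B j l != 0 -> 0 < w l) ->
  in_colspace (unitv j) (Nmx B w).
Proof.
move=> rk w0 hw; rewrite /in_colspace Nmx_sym (hplus_sum j rk) trS.
apply: summx_sub => l _; rewrite trmx_mul.
have [hz|hnz] := eqVneq (hplus B j l) 0; first by rewrite hz trmx0 mul0mx sub0mx.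
exact: submx_trans (submxMl _ _) (blk_sub B w0 (hw l hnz)).
Qed.
End SJ.

Section SK.
Variable R : realType.

Lemma Nunif m K (s : 'I_K -> nat) (B : forall l, 'M[R]_(m, s l)) (a : R) :
  Nmx B (fun _ => a) = a *: (Bcat B *m (Bcat B)^T).
Proof. by rewrite /Nmx -scaler_sumr /Bcat tr_mxrow mul_mxrow_mxcol. Qed.

Lemma mulmxZZ p q r (x y : R) (A : 'M[R]_(p, q)) (B : 'M[R]_(q, r)) :
  (x *: A) *m (y *: B) = (x * y) *: (A *m B).
Proof. by rewrite -scalemxAl -scalemxAr scalerA. Qed.

Lemma unif_weight K : (0 < K)%N -> is_weight (fun _ : 'I_K => (K%:R : R)^-1).
Proof.
move=> hK; split => [l|]; first by rewrite invr_ge0 ler0n.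
by rewrite sumr_const card_ord -[_^-1 *+ _]mulr_natr mulVf // pnatr_eq0 -lt0n.
Qed.
End SK.

Unset Implicit Arguments. Set Strict Implicit.

Theorem theorem2 (R : realType) (n m N K : nat)
  (f : 'I_n -> 'cV[R]_m) (s : 'I_K -> nat) (B : forall l : 'I_K, 'M[R]_(m, s l))
  (d0 dstar : 'I_n -> bool) (wstar : 'I_m -> 'I_K -> R) :
  (2 <= m)%N -> (m <= N)%N -> (N <= n)%N -> (0 < K)%N ->
  \rank (\matrix_(r < m, c < n) f c r 0) = m ->
  \rank (Bcat B) = m ->
  (forall l (c : 'I_(s l)), col c (B l) != 0) ->
  is_design N d0 -> infomx f d0 \in unitmx ->
  (forall j, is_wstar B j (wstar j)) ->
  is_PhiB_optimal N f B dstar ->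
  let alpha := PhiB B (infomx f d0) in
  let Sigma := invmx (infomx f dstar) in
  forall j k : 'I_m, j != k ->
    `|Sigma j k| <= alpha / 2 * K%:R *
        lambda_max ((Ejk j k)^T *m invmx (Bcat B *m (Bcat B)^T) *m Ejk j k)
 /\ `|Sigma j k| <= alpha / 2 *
        lambda_max ((Ejk j k)^T *m mp_pinv (Nmx B (wavg (wplus B j) (wplus B k)))
                      *m Ejk j k)
 /\ `|Sigma j k| <= alpha / 2 *
        lambda_max ((Ejk j k)^T *m mp_pinv (Nmx B (wavg (wstar j) (wstar k)))
                      *m Ejk j k).
Proof.
move=> hm1 hm2 hm3 hK rkF rkB hcol hd0 hu0 hws [hds huM opt] alpha Sigma j k hjk.
have Phi : PhiB B (infomx f dstar) <= alpha := opt d0 hd0 hu0.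
rewrite /Sigma.
split; [|split].
- pose a : R := (K%:R)^-1.
  have kn0 : (K%:R : R) != 0 by rewrite pnatr_eq0 -lt0n.
  set G := Bcat B *m (Bcat B)^T.
  have uG : G \in unitmx.
    by apply: row_free_gram; rewrite /row_free rkB.
  have sG : G^T = G by rewrite /G trmx_mul trmxK.
  have sQ : (invmx G)^T = invmx G by rewrite trmx_inv sG.
  have NE := Nunif B a.
  have NPN : Nmx B (fun _ => a) *m (K%:R *: invmx G) *m Nmx B (fun _ => a) = Nmx B (fun _ => a).
    rewrite NE !mulmxZZ mulmxV // mul1mx; congr (_ *: _).
    by rewrite /a mulVf // mul1r.
  have cj : forall i, in_colspace (unitv i) (Nmx B (fun _ => a)).
    move=> i; rewrite /in_colspace Nmx_sym; apply/submxP.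
    exists (K%:R *: invmx G *m unitv i)^T.
    rewrite -(Nmx_sym B) -trmx_mul NE -/G mulmxA mulmxZZ mulmxV // -scalemxAl mul1mx.
    by rewrite /a mulVf // scale1r.
  exact: (key huM Phi (@unif_weight R K hK) (cj j) (cj k) sQ (ler0n _ _) NPN).
- have [wj pj] := wplus_props j rkB; have [wk pk] := wplus_props k rkB.
  have ww := wavg_weight wj wk.
  have w0 := ww.1.
  have posj : forall l, hplus B j l != 0 -> 0 < wavg (wplus B j) (wplus B k) l.
    move=> l hl; have h1 := pj l hl; have h2 := wk.1 l; rewrite /wavg; apply: divr_gt0; lra.
  have posk : forall l, hplus B k l != 0 -> 0 < wavg (wplus B j) (wplus B k) l.
    move=> l hl; have h1 := pk l hl; have h2 := wj.1 l; rewrite /wavg; apply: divr_gt0; lra.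
  have cj := colsp_h rkB w0 posj.
  have ck := colsp_h rkB w0 posk.
  have sQ := mp_pinv_sym (Nmx_sym B (wavg (wplus B j) (wplus B k))).
  have [h1 _ _ _] := mp_pinvP (Nmx B (wavg (wplus B j) (wplus B k))).
  rewrite -[alpha / 2]mulr1.
  apply: (key huM Phi ww cj ck sQ ler01).
  by rewrite scale1r.
- have [wj cjj _] := hws j; have [wk ckk _] := hws k.
  have ww := wavg_weight wj wk.
  have w0 := ww.1.
  have cj : in_colspace (unitv j) (Nmx B (wavg (wstar j) (wstar k))).
    apply: (colsp_mono wj.1 w0 _ cjj) => l hl; have h2 := wk.1 l; rewrite /wavg; apply: divr_gt0; lra.
  have ck : in_colspace (unitv k) (Nmx B (wavg (wstar j) (wstar k))).
    apply: (colsp_mono wk.1 w0 _ ckk) => l hl; have h2 := wj.1 l; rewrite /wavg; apply: divr_gt0; lra.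
  have sQ := mp_pinv_sym (Nmx_sym B (wavg (wstar j) (wstar k))).
  have [h1 _ _ _] := mp_pinvP (Nmx B (wavg (wstar j) (wstar k))).
  rewrite -[alpha / 2]mulr1.
  apply: (key huM Phi ww cj ck sQ ler01).
  by rewrite scale1r.
Qed.
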